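(* Let $n$ be even and let $T_n$ be a nearly regular tournament on $n$ vertices, i.e. every vertex has out-degree and in-degree in $\{\frac{n}{2}-1,\frac{n}{2}\}$. Then $SV(T_n)=\{v\in V(T_n): d^{+}(v)=\delta^{+}(T_n)\}$, where $\delta^{+}(T_n)$ is the minimum out-degree of $T_n$.
   Context: A tournament is an orientation of a complete graph. $N^{+}(v)$ is the set of out-neighbours of $v$ and $d^{+}(v)=|N^{+}(v)|$; $N^{+2}(v)$ is the set of vertices $w\notin N^{+}(v)\cup\{v\}$ such that $u\to w$ is an arc for some $u\in N^{+}(v)$. A Seymour vertex is a vertex $v$ with $|N^{+2}(v)|\ge|N^{+}(v)|$; $SV(D)$ denotes the set of Seymour vertices of $D$. *)

(* Defs.v *)
From mathcomp Require Import all_boot.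
Set Implicit Arguments. Unset Strict Implicit. Unset Printing Implicit Defensive.

Definition is_tournament (V : finType) (r : rel V) : Prop :=
  (forall v, ~~ r v v) /\ (forall u v, u != v -> (r u v (+) r v u)).

Definition outN (V : finType) (r : rel V) (v : V) : {set V} := [set u | r v u].
Definition inN (V : finType) (r : rel V) (v : V) : {set V} := [set u | r u v].

Definition out2N (V : finType) (r : rel V) (v : V) : {set V} :=
  [set w | (w \notin outN r v) && (w != v) &&
           [exists u, (u \in outN r v) && r u w]].

Definition SV (V : finType) (r : rel V) : {set V} :=
  [set v | #|outN r v| <= #|out2N r v|].

(* minimum out-degree delta^+ (with the convention #|V| = 0 for empty V) *)
Definition min_outdeg (V : finType) (r : rel V) : nat :=
  \big[minn/#|V|]_(v : V) #|outN r v|.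

(* Main.v *)
Require Import Defs.
From mathcomp Require Import all_boot.
From mathcomp Require Import zify.
Set Implicit Arguments. Unset Strict Implicit.

Lemma bigmin_le (V : finType) (f : V -> nat) (n : nat) (v0 : V) :
  \big[minn/n]_(v : V) f v <= f v0.
Proof.
have : v0 \in index_enum V by rewrite mem_index_enum.
elim: (index_enum V) => [//|a s IH]; rewrite inE big_cons.
case/orP=> [/eqP->|/IH h]; first exact: geq_minl.
exact: leq_trans (geq_minr _ _) h.
Qed.

Lemma card_set_sum (V : finType) (P : pred V) :
  #|[set u | P u]| = \sum_u (P u : nat).
Proof.
rewrite -sum1_card big_mkcond; apply: eq_bigr => u _; rewrite inE; by case: (P u).
Qed.

Section S.
Variables (V : finType) (r : rel V) (Ht : is_tournament r).

Lemma deg_sum v : #|outN r v| + #|inN r v| = #|V|.-1.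
Proof.
rewrite -cardsUI.
have -> : outN r v :&: inN r v = set0.
  apply/setP=> u; rewrite !inE; case: (eqVneq u v) => [->|nuv].
    by rewrite (negbTE (Ht.1 v)).
  by move: (Ht.2 _ _ nuv); case: (r v u); case: (r u v).
rewrite cards0 addn0 -(cardsC1 v); apply: eq_card => u; rewrite !inE; case: (eqVneq u v) => [->|nuv].
  by rewrite (negbTE (Ht.1 v)).
by move: (Ht.2 _ _ nuv); case: (r v u); case: (r u v).
Qed.

Lemma sum_out_in : \sum_v #|outN r v| = \sum_v #|inN r v|.
Proof.
rewrite /outN /inN.
under eq_bigr => v _ do rewrite card_set_sum.
under [RHS]eq_bigr => v _ do rewrite card_set_sum.
by rewrite exchange_big.
Qed.

Lemma sum_out : (\sum_v #|outN r v|).*2 = #|V| * #|V|.-1.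
Proof.
rewrite -addnn {2}sum_out_in -big_split /=.
under eq_bigr => v _ do rewrite deg_sum.
by rewrite sum_nat_const cardE.
Qed.
Lemma asym a b : r a b -> ~~ r b a.
Proof.
move=> hab; case: (eqVneq a b) => [e|nab].
  by move: hab; rewrite e (negbTE (Ht.1 b)).
by move: (Ht.2 _ _ nab); rewrite hab; case: (r b a).
Qed.

Lemma tot a b : a != b -> ~~ r a b -> r b a.
Proof. by move=> nab; move: (Ht.2 _ _ nab); case: (r a b); case: (r b a). Qed.

Lemma notout2 v w u : r w v -> w \notin out2N r v -> r v u -> r w u.
Proof.
move=> hwv hw hvu.
have nwu : w != u.
  apply/eqP=> e; move: hvu; rewrite -e; move/asym; by rewrite hwv.
have nwv : w != v by apply/eqP=> e; move: hwv; rewrite e (negbTE (Ht.1 v)).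
apply: tot; first by rewrite eq_sym.
apply/negP => ruw; move/negP: hw; apply.
rewrite !inE (negbTE (asym hwv)) nwv /=; apply/existsP; exists u; by rewrite inE hvu.
Qed.
End S.

Theorem mainTheorem4 (V : finType) (r : rel V)
  (Ht : is_tournament r)
  (Heven : ~~ odd #|V|)
  (Hnr : forall v : V,
     #|outN r v| \in [:: (#|V|./2).-1; #|V|./2] /\
     #|inN r v| \in [:: (#|V|./2).-1; #|V|./2]) :
  SV r = [set v | #|outN r v| == min_outdeg r].
Proof.
set n := #|V| in Heven Hnr *.
set k := n./2 in Hnr.
have hn : n = k + k by rewrite -[LHS]odd_double_half (negbTE Heven) add0n -addnn.
have Hd : forall v, #|outN r v| = k.-1 \/ #|outN r v| = k.
  move=> v; case: (Hnr v) => /[!inE] /orP[] /eqP ? _; by [left|right].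
case: (posnP n) => [n0|npos].
  apply/setP=> v; have : 0 < n by apply/card_gt0P; exists v.
  by rewrite n0.
have [v0 hv0] : exists v0, #|outN r v0| = k.-1 /\ 0 < k.
  have kpos : 0 < k by lia.
  case: (boolP [exists v, #|outN r v| == k.-1]) => [/existsP [v /eqP hv]|hne].
    by exists v.
  exfalso.
  have hall : forall v, #|outN r v| = k.
    move=> v; case: (Hd v) => // hv; move/existsP: hne; case; exists v; by rewrite hv.
  have := sum_out Ht; under eq_bigr => v _ do rewrite hall.
  rewrite sum_nat_const cardE -/n -cardE -/n => h.
  move: h; rewrite -muln2; nia.
have Hmin : min_outdeg r = k.-1.
  apply/eqP; rewrite eqn_leq; apply/andP; split.
    by rewrite -hv0.1 bigmin_le.
  rewrite /min_outdeg; apply: (big_ind (fun x => k.-1 <= x)).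
  - lia.
  - move=> x y hx hy; by rewrite leq_min hx hy.
  - by move=> v _; case: (Hd v) => ->; lia.
rewrite Hmin.
apply/setP=> v; rewrite /SV !inE.
have ds := deg_sum Ht v; rewrite -/n in ds.
case: (Hd v) => hv; last first.
  rewrite hv.
  have hs : out2N r v \subset ~: (v |: outN r v).
    apply/subsetP=> w; rewrite !inE; case/andP=> /andP[a b] _; by rewrite (negbTE a) (negbTE b).
  have := subset_leq_card hs.
  have := cardsC (v |: outN r v).
  rewrite cardsU1 hv !inE (Ht.1 v) -/n /=.
  have : k.-1 != k by lia.
  move/negbTE; rewrite eq_sym => -> a b; apply/negbTE; rewrite -ltnNge. lia.
rewrite hv eqxx.
set D := inN r v :\: out2N r v.
have hD : #|D| <= 1.
  rewrite leqNgt; apply/negP => /card_gt1P [w1 [w2 [h1 h2 n12]]].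
  move: h1 h2; rewrite !in_setD => /andP[h1 i1] /andP[h2 i2].
  rewrite inE in i1; rewrite inE in i2.
  wlog r12 : w1 w2 h1 i1 h2 i2 n12 / r w1 w2.
    move=> W; case r12: (r w1 w2); first exact: (W w1 w2).
    apply: (W w2 w1) => //; first by rewrite eq_sym.
    by apply: tot => //; rewrite r12.
  have hsub : v |: (w2 |: outN r v) \subset outN r w1.
    apply/subsetP=> u; rewrite !inE; case/orP=> [/eqP->//|/orP[/eqP->//|hu]].
    exact: (notout2 Ht i1 h1 hu).
  have := subset_leq_card hsub.
  rewrite !cardsU1 hv !inE (negbTE (asym Ht i2)).
  have -> : (v == w2) = false.
    by apply/negbTE/eqP=> e; move: i2; rewrite e (negbTE (Ht.1 w2)).
  rewrite (negbTE (Ht.1 v)) /=.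
  case: (Hd w1) => ->; lia.
have := cardsID (out2N r v) (inN r v).
have := subset_leq_card (subsetIr (inN r v) (out2N r v)).
rewrite -/D. lia.
Qed.
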